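(* Let $\mathsf{X}=\mathsf{Y}=\mathbb{R}^d$ with probability measures $\mu,\nu$ and cost $c(x,y)=\|x-y\|^2$, let $\pi_\varepsilon$ be the $(c,\varepsilon)$-cyclically invariant coupling for each $\varepsilon>0$ (assumed to exist), and assume $\pi_\varepsilon\to\pi_*$ weakly as $\varepsilon\to0$ for some $\pi_*\in\Pi(\mu,\nu)$. Let $\Gamma:=\operatorname{spt}\pi_*$, $\mathsf{X}_0:=\operatorname{proj}_{\mathsf{X}}\Gamma$, $\mathsf{Y}_0:=\operatorname{proj}_{\mathsf{Y}}\Gamma$. Assume there exists a Kantorovich potential $\psi$ such that $I(x,y)=c(x,y)-\psi^c(y)+\psi(x)$ for all $(x,y)\in\mathsf{X}_0\times\mathsf{Y}_0$. Let $\mathsf{X}_0$ be strictly convex and consider $(x,y)\in(\mathsf{X}_0\times\mathsf{Y}_0)\setminus\Gamma$ with $x\in\partial\mathsf{X}_0$. Suppose that $I(\tilde x,y)>0$ for all $\tilde x\in\operatorname{Int}\mathsf{X}_0\cap B_r(x)$, for some $r>0$. Then $I(x,y)>0$.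
   Context: $\mathsf{X}_0$ is strictly convex if for distinct $x,x'\in\mathsf{X}_0$ the open segment $(x,x')$ lies in $\operatorname{Int}\mathsf{X}_0$. $\Pi(\mu,\nu)$ is the set of couplings and $P:=\mu\otimes\nu$. A coupling $\pi$ is $(c,\varepsilon)$-cyclically invariant if $\pi\sim P$ and its density admits a version $\frac{d\pi}{dP}:\mathsf{X}\times\mathsf{Y}\to(0,\infty)$ with $\prod_{i=1}^k\frac{d\pi}{dP}(x_i,y_i)=\exp\big(-\frac1\varepsilon[\sum_{i=1}^k c(x_i,y_i)-\sum_{i=1}^k c(x_i,y_{i+1})]\big)\prod_{i=1}^k\frac{d\pi}{dP}(x_i,y_{i+1})$ for all $k$ and points, $y_{k+1}:=y_1$. A proper $\psi:\mathsf{X}\to(-\infty,\infty]$ is $c$-convex if $\psi(x)=\sup_y[\zeta(y)-c(x,y)]$ for some $\zeta:\mathsf{Y}\to[-\infty,\infty]$; $\psi^c(y):=\inf_x[\psi(x)+c(x,y)]$; $\partial_c\psi=\{(x,y):\psi^c(y)-\psi(x)=c(x,y)\}$; a Kantorovich potential is a $c$-convex $\psi$ with $\Gamma\subset\partial_c\psi$. The function $I$ is $I(x,y):=\sup_{k\ge2}\sup_{(x_i,y_i)_{i=2}^k\subset\Gamma}\sup_{\sigma\in\Sigma(k)}\sum_{i=1}^k c(x_i,y_i)-\sum_{i=1}^k c(x_i,y_{\sigma(i)})$ with $(x_1,y_1):=(x,y)$ and $\Sigma(k)$ the permutations of $\{1,\dots,k\}$. *)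

(* Defs.v *)
From HB Require Import structures.
From mathcomp Require Import all_boot all_order all_algebra.
From mathcomp Require Import all_classical all_reals all_analysis.
From mathcomp Require Import perm.
Set Implicit Arguments. Unset Strict Implicit. Unset Printing Implicit Defensive.
Import Order.TTheory GRing.Theory Num.Theory.
Import numFieldNormedType.Exports.
Local Open Scope classical_set_scope.
Local Open Scope ring_scope.

(* R^d is represented by row vectors 'rV[R]_d (with their usual topology);
   as a measurable space it carries the Borel sigma-algebra generated by the
   open sets. *)
Notation Bpt R d := (g_sigma_algebraType (@open 'rV[R]_d)).

Definition enorm (R : realType) (d : nat) (x : 'rV[R]_d) : R :=
  Num.sqrt (\sum_(i < d) (x ord0 i) ^+ 2).
Definition cost (R : realType) (d : nat) (x y : 'rV[R]_d) : R :=
  enorm (x - y) ^+ 2.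
Definition eball (R : realType) (d : nat) (x : 'rV[R]_d) (r : R) :=
  [set z : 'rV[R]_d | enorm (z - x) < r].

Definition bdry (T : topologicalType) (A : set T) := closure A `\` interior A.

Definition strictly_convex (R : realType) (d : nat) (X0 : set 'rV[R]_d) :=
  forall x x', X0 x -> X0 x' -> x != x' ->
    forall t : R, 0 < t < 1 -> interior X0 ((1 - t) *: x + t *: x').

Definition is_coupling (R : realType) (d : nat) (mu nu : probability (Bpt R d) R)
  (pi : probability (Bpt R d * Bpt R d)%type R) :=
  (forall A : set (Bpt R d), measurable A -> pi (A `*` setT) = mu A) /\
  (forall B : set (Bpt R d), measurable B -> pi (setT `*` B) = nu B).

Definition cyc_invariant (R : realType) (d : nat) (eps : R)
  (mu nu : probability (Bpt R d) R) (pi : probability (Bpt R d * Bpt R d)%type R) :=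
  is_coupling mu nu pi /\
  (pi `<< (mu \x nu)%E) /\ ((mu \x nu)%E `<< pi) /\
  exists f : (Bpt R d * Bpt R d)%type -> R,
    measurable_fun setT f /\ (forall z, 0 < f z) /\
    (forall A, measurable A -> pi A = (\int[(mu \x nu)%E]_(z in A) (f z)%:E)%E) /\
    forall (k : nat) (xs ys : 'I_k -> 'rV[R]_d),
      \prod_(i < k) f (xs i, ys i) =
      expR (- eps^-1 * (\sum_(i < k) cost (xs i) (ys i)
                        - \sum_(i < k) cost (xs i) (ys (ordS i))))
      * \prod_(i < k) f (xs i, ys (ordS i)).

Definition weak_conv_0 (R : realType) (d : nat)
  (pis : R -> probability (Bpt R d * Bpt R d)%type R)
  (pistar : probability (Bpt R d * Bpt R d)%type R) :=
  forall f : 'rV[R]_d * 'rV[R]_d -> R, continuous f ->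
    (exists M : R, forall z, `|f z| <= M) ->
    ((fun eps => \int[pis eps]_z (f z)%:E) @ 0^'+ --> \int[pistar]_z (f z)%:E)%E.

Definition spt (R : realType) (d : nat) (pi : probability (Bpt R d * Bpt R d)%type R)
  : set ('rV[R]_d * 'rV[R]_d) :=
  [set z | forall U : set ('rV[R]_d * 'rV[R]_d), open U -> U z -> (0 < pi U)%E].

Definition proper_fun (R : realType) (d : nat) (psi : 'rV[R]_d -> \bar R) :=
  (forall x, psi x != -oo%E) /\ exists x, psi x != +oo%E.

Definition c_convex (R : realType) (d : nat) (psi : 'rV[R]_d -> \bar R) :=
  proper_fun psi /\
  exists zeta : 'rV[R]_d -> \bar R,
    forall x, psi x = ereal_sup [set (zeta y - (cost x y)%:E)%E | y in [set: 'rV[R]_d]].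

Definition c_transform (R : realType) (d : nat) (psi : 'rV[R]_d -> \bar R)
  (y : 'rV[R]_d) : \bar R :=
  ereal_inf [set (psi x + (cost x y)%:E)%E | x in [set: 'rV[R]_d]].

Definition c_subdiff (R : realType) (d : nat) (psi : 'rV[R]_d -> \bar R) :=
  [set z : 'rV[R]_d * 'rV[R]_d | (c_transform psi z.2 - psi z.1)%E = (cost z.1 z.2)%:E].

Definition kantorovich_potential (R : realType) (d : nat)
  (Gamma : set ('rV[R]_d * 'rV[R]_d)) (psi : 'rV[R]_d -> \bar R) :=
  c_convex psi /\ Gamma `<=` c_subdiff psi.

(* the function I; k = n.+2 >= 2, index 0 plays the role of index 1 *)
Definition Ifun (R : realType) (d : nat) (Gamma : set ('rV[R]_d * 'rV[R]_d))
  (x y : 'rV[R]_d) : \bar R :=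
  ereal_sup [set v%:E | v in
    [set v : R | exists (n : nat) (p : 'I_n.+2 -> 'rV[R]_d * 'rV[R]_d) (s : {perm 'I_n.+2}),
       p ord0 = (x, y) /\ (forall i, i != ord0 -> Gamma (p i)) /\
       v = \sum_(i < n.+2) cost (p i).1 (p i).2
           - \sum_(i < n.+2) cost (p i).1 (p (s i)).2]].

(* Main.v *)
Require Import Defs.
From HB Require Import structures.
From mathcomp Require Import all_boot all_order all_algebra.
From mathcomp Require Import all_classical all_reals all_analysis.
Import Order.TTheory GRing.Theory Num.Theory.
Import numFieldNormedType.Exports.
Local Open Scope classical_set_scope.
Local Open Scope ring_scope.
From mathcomp Require Import ring lra.

Lemma cost_sum (R : realType) (d : nat) (x y : 'rV[R]_d) :
  cost x y = \sum_(i < d) (x ord0 i - y ord0 i) ^+ 2.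
Proof.
rewrite /cost /enorm sqr_sqrtr; last by apply: sumr_ge0 => i _; exact: sqr_ge0.
by apply: eq_bigr => i _; rewrite !mxE.
Qed.

Lemma cost_affine (R : realType) (d : nat) (x x' y w : 'rV[R]_d) (t : R) :
  cost ((1 - t) *: x + t *: x') y - cost ((1 - t) *: x + t *: x') w =
  (1 - t) * (cost x y - cost x w) + t * (cost x' y - cost x' w).
Proof.
rewrite !cost_sum -!sumrB !mulr_sumr -big_split /=.
apply: eq_bigr => i _; rewrite !mxE; ring.
Qed.

Lemma enormZ (R : realType) (d : nat) (t : R) (v : 'rV[R]_d) :
  enorm (t *: v) = `|t| * enorm v.
Proof.
rewrite /enorm.
have -> : \sum_(i < d) (t *: v) ord0 i ^+ 2 = t ^+ 2 * \sum_(i < d) v ord0 i ^+ 2.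
  by rewrite mulr_sumr; apply: eq_bigr => i _; rewrite !mxE exprMn.
by rewrite sqrtrM ?sqr_ge0 // sqrtr_sqr.
Qed.

Lemma enorm_ge0 (R : realType) (d : nat) (v : 'rV[R]_d) : 0 <= enorm v.
Proof. exact: sqrtr_ge0. Qed.

Theorem lemma5p4 (R : realType) (d : nat)
  (mu nu : probability (Bpt R d) R)
  (pis : R -> probability (Bpt R d * Bpt R d)%type R)
  (pistar : probability (Bpt R d * Bpt R d)%type R)
  (psi : 'rV[R]_d -> \bar R) (x y : 'rV[R]_d) :
  (forall eps : R, 0 < eps -> cyc_invariant eps mu nu (pis eps)) ->
  is_coupling mu nu pistar ->
  weak_conv_0 pis pistar ->
  kantorovich_potential (spt pistar) psi ->
  (forall x0 y0, (fst @` spt pistar) x0 -> (snd @` spt pistar) y0 ->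
     Ifun (spt pistar) x0 y0 = ((cost x0 y0)%:E - c_transform psi y0 + psi x0)%E) ->
  strictly_convex (fst @` spt pistar) ->
  (fst @` spt pistar) x -> (snd @` spt pistar) y -> ~ spt pistar (x, y) ->
  bdry (fst @` spt pistar) x ->
  (exists2 r : R, 0 < r & forall xt, interior (fst @` spt pistar) xt ->
       eball x r xt -> (0 < Ifun (spt pistar) xt y)%E) ->
  (0 < Ifun (spt pistar) x y)%E.
Proof.
move=> _ _ _ [[[psi_noninf _] [zeta Hzeta]] Hsub] HI Hconv Xx Yy Ngam _ [r r0 Hr].
rewrite ltNge; apply/negP => HIle.
have Yy' := Yy.
case: Yy' => -[x' y'] Gam /= ey; subst y'.
have xx' : x != x' by apply/eqP => E; subst.
have Xx' : (fst @` spt pistar) x' by exists (x', y).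
have Hsd := Hsub _ Gam; rewrite /c_subdiff /= in Hsd.
have := psi_noninf x'; case E1: (psi x') => [px'| |] // _; rewrite E1 in Hsd;
  last by case: (c_transform psi y) Hsd.
case Ect: (c_transform psi y) Hsd => [ct| |] // Hsd.
have {}Hsd : ct - px' = cost x' y by case: Hsd.
rewrite HI // Ect in HIle.
have := psi_noninf x; case E0: (psi x) => [px| |] // _; rewrite E0 in HIle;
  last by [].
have {}HIle : cost x y - ct + px <= 0 by rewrite -lee_fin.
pose E := enorm (x' - x).
have E0' : 0 <= E by apply: enorm_ge0.
pose t := r / (2 * (E + r)).
have Er : 0 < E + r by lra.
have t0 : 0 < t by rewrite /t divr_gt0 // mulr_gt0.
have t1 : t < 1.
  rewrite /t ltr_pdivrMr ?mulr_gt0 // mul1r; lra.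
have tE : t * E < r.
  rewrite /t mulrAC ltr_pdivrMr ?mulr_gt0 //; nra.
pose z := (1 - t) *: x + t *: x'.
have Hint : interior (fst @` spt pistar) z.
  apply: Hconv => //; apply/andP; split => //; lra.
have Hball : eball x r z.
  rewrite /eball /=.
  have -> : z - x = t *: (x' - x) by apply/rowP => i; rewrite !mxE; ring.
  by rewrite enormZ gtr0_norm.
have Hz := Hr z Hint Hball.
rewrite HI // ?Ect in Hz; last exact: interior_subset.
have Hpz : (psi z <= (ct - cost z y)%:E)%E.
  rewrite Hzeta; apply: ge_ereal_sup => _ [w _ <-].
  case Ea: (zeta w) => [a| |].
  - have h1 : ((a%:E - (cost x w)%:E) <= psi x)%E.
      by rewrite Hzeta; apply: ereal_sup_ubound; exists w => //; rewrite Ea.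
    have h2 : ((a%:E - (cost x' w)%:E) <= psi x')%E.
      by rewrite Hzeta; apply: ereal_sup_ubound; exists w => //; rewrite Ea.
    rewrite E0 in h1; rewrite E1 in h2.
    rewrite -EFinD lee_fin in h1; rewrite -EFinD lee_fin in h2.
    rewrite -EFinD lee_fin.
    have := @cost_affine _ _ x x' y w t; rewrite -/z => Ha.
    have h3 : (1 - t) * (a - cost x w + cost x y) <= (1 - t) * ct.
      by apply: ler_wpM2l; lra.
    have h4 : t * (a - cost x' w + cost x' y) <= t * ct.
      by apply: ler_wpM2l; lra.
    nra.
  - have h1 : ((+oo - (cost x w)%:E) <= psi x)%E.
      by rewrite Hzeta; apply: ereal_sup_ubound; exists w => //; rewrite Ea.
    by rewrite E0 in h1.
  - by rewrite leNye.
move: Hz Hpz; case: (psi z) => [pz| |] //.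
rewrite lee_fin -EFinB -EFinD lte_fin => ? ?; lra.
Qed.
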